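(* Let $G$ be an affine partial cube with set of antipodes $A(G)$, and let $E_e$ be a $\Theta$-class of $G$. Then $A(\pi_e(G))=\pi_e(A(G))$.
   Context: Hypercube $Q_n$: vertex set $\{+,-\}^n$, adjacency = differing in one coordinate. A partial cube is an isometric subgraph of $Q_n$ with $n$ minimal; its edges split into $\Theta$-classes $E_f$ (edges flipping coordinate $f$), with halfspaces $E_f^{\pm}$ (vertices whose coordinate $f$ is $\pm$). A partial cube is antipodal if with each vertex it contains the vertex with all coordinates flipped. An affine partial cube is a halfspace of an antipodal partial cube. The contraction $\pi_e(G)$ is the graph obtained by contracting all edges of $E_e$ (a vertex is mapped to its sign vector with coordinate $e$ deleted); contractions of affine partial cubes are affine. For a partial cube $G$ and vertices $u,w$, the interval $[u,w]$ is the set of vertices on shortest $u$–$w$ paths. The antipodes $A(G)$ of an affine partial cube $G$ are the vertices $u\in G$ for which there is a vertex $-u\in G$ with $[u,-u]=V(G)$ (equivalently, if $G$ is the halfspace $E_f^+$ of an antipodal $G'$, the vertices of $E_f^+$ incident to an edge of $E_f$). *)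

(* Defs.v *)
From mathcomp Require Import all_boot.
Set Implicit Arguments. Unset Strict Implicit. Unset Printing Implicit Defensive.

(* Vertices of the hypercube Q_n: sign vectors, + = true, - = false. *)
Notation vert n := {ffun 'I_n -> bool}.

Definition hamming n (x y : vert n) : nat := #|[set i | x i != y i]|.

Definition negv n (x : vert n) : vert n := [ffun i => ~~ x i].

Definition adjV n (V : {set vert n}) : rel (vert n) :=
  fun a b => (b \in V) && (hamming a b == 1).

Definition walk n (V : {set vert n}) (x : vert n) (p : seq (vert n)) : bool :=
  (x \in V) && path (adjV V) x p.

Definition gdist n (V : {set vert n}) (x y : vert n) (k : nat) : Prop :=
  (exists p, [/\ walk V x p, last x p = y & size p = k]) /\
  (forall p, walk V x p -> last x p = y -> k <= size p).

Definition in_interval n (V : {set vert n}) (u w x : vert n) : Prop :=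
  exists a b, [/\ gdist V u x a, gdist V x w b & gdist V u w (a + b)].

(* V is (the vertex set of) a partial cube isometrically embedded in Q_n
   with n minimal: nonempty, isometric, every coordinate non-constant. *)
Definition partial_cube n (V : {set vert n}) : Prop :=
  [/\ V != set0,
      (forall x y, x \in V -> y \in V -> gdist V x y (hamming x y))
    & (forall i : 'I_n, exists x y, [/\ x \in V, y \in V & x i != y i])].

Definition antipodal n (V : {set vert n}) : Prop :=
  forall x, x \in V -> negv x \in V.

Definition delete m (e : 'I_m.+1) (v : vert m.+1) : vert m :=
  [ffun i => v (lift e i)].

Definition contract m (e : 'I_m.+1) (V : {set vert m.+1}) : {set vert m} :=
  [set delete e v | v in V].

(* V is an affine partial cube: (a partial cube that is) the halfspace E_f^+
   of an antipodal partial cube V' in Q_{n+1}, with the (now constant)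
   coordinate f deleted. *)
Definition affine_pc n (V : {set vert n}) : Prop :=
  partial_cube V /\
  exists (f : 'I_n.+1) (V' : {set vert n.+1}),
    [/\ partial_cube V', antipodal V' & V = [set delete f v | v in V' & v f]].

Definition is_antipode n (V : {set vert n}) (u : vert n) : Prop :=
  [/\ u \in V, negv u \in V & forall x, x \in V <-> in_interval V u (negv u) x].

(* Main.v *)
Require Import Defs.
From mathcomp Require Import all_boot.
From mathcomp Require Import zify.
Set Implicit Arguments. Unset Strict Implicit. Unset Printing Implicit Defensive.

Lemma hammingE n (x y : vert n) : hamming x y = \sum_i (x i != y i : nat).
Proof.
rewrite /hamming -sum1_card big_mkcond /=; apply: eq_bigr => i _.
by rewrite inE; case: (x i != y i).
Qed.

Lemma hamming_lift n (f : 'I_n.+1) (x y : vert n.+1) :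
  hamming x y = (x f != y f) + hamming (delete f x) (delete f y).
Proof.
rewrite !hammingE (bigD1_ord f) //=; congr (_ + _); apply: eq_bigr => i _.
by rewrite !ffunE.
Qed.

Lemma hamming0 n (x y : vert n) : hamming x y = 0 -> x = y.
Proof.
rewrite hammingE => /eqP; rewrite sum_nat_eq0 => /forallP H.
apply/ffunP => i; have := H i; by case: (x i); case: (y i).
Qed.

Lemma hammingxx n (x : vert n) : hamming x x = 0.
Proof. by rewrite hammingE big1 // => i _; rewrite eqxx. Qed.

Lemma hamming_tri n (x y z : vert n) : hamming x z <= hamming x y + hamming y z.
Proof.
rewrite !hammingE -big_split; apply: leq_sum => i _.
by case: (x i); case: (y i); case: (z i).
Qed.

Lemma hamming_neg n (u x : vert n) :
  hamming u x + hamming x (negv u) = hamming u (negv u).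
Proof.
rewrite !hammingE -big_split; apply: eq_bigr => i _; rewrite !ffunE.
by case: (u i); case: (x i).
Qed.

Lemma delete_negv m (e : 'I_m.+1) (x : vert m.+1) :
  delete e (negv x) = negv (delete e x).
Proof. by apply/ffunP => i; rewrite !ffunE. Qed.

Lemma negvK n (x : vert n) : negv (negv x) = x.
Proof. by apply/ffunP => i; rewrite !ffunE negbK. Qed.

Lemma walk_last n (W : {set vert n}) x p : walk W x p -> last x p \in W.
Proof.
elim: p x => [|y p IH] x /=; first by case/andP.
case/andP => _ /andP [/andP [Hy _] Hp]; apply: IH; by rewrite /walk Hy.
Qed.

Lemma walk_lb n (W : {set vert n}) x p : walk W x p -> hamming x (last x p) <= size p.
Proof.
elim: p x => [|y p IH] x /=; first by rewrite hammingxx.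
case/andP => _ /andP [/andP [Hy /eqP H1] Hp].
have H : hamming y (last y p) <= size p by apply: IH; rewrite /walk Hy.
have := hamming_tri x y (last y p); rewrite H1 add1n => H2.
exact: (leq_trans H2).
Qed.

Lemma gdist_of_walk n (W : {set vert n}) x p :
  walk W x p -> size p <= hamming x (last x p) ->
  gdist W x (last x p) (hamming x (last x p)).
Proof.
move=> Hw Hs; split.
  exists p; split => //; apply/eqP; by rewrite eqn_leq Hs (walk_lb Hw).
move=> q Hq <-; exact: (walk_lb Hq).
Qed.

Definition iso n (W : {set vert n}) :=
  forall x y, x \in W -> y \in W -> gdist W x y (hamming x y).

Lemma antipode_iso n (W : {set vert n}) u :
  iso W -> u \in W -> negv u \in W -> is_antipode W u.
Proof.
move=> H Hu Hnu; split => // x; split.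
  move=> Hx; exists (hamming u x), (hamming x (negv u)); split; try exact: H.
  rewrite hamming_neg; exact: H.
case=> a [b [[[p [Hw Hl _]] _] _ _]]; rewrite -Hl; exact: walk_last Hw.
Qed.

Lemma proj_walk m (e : 'I_m.+1) (V : {set vert m.+1}) p a :
  walk V a p -> exists q, [/\ walk (contract e V) (delete e a) q,
    last (delete e a) q = delete e (last a p) &
    size q + (a e != (last a p) e) <= size p].
Proof.
elim: p a => [|y p IH] a /=.
  case/andP => Ha _; exists [::]; split => //=; last by rewrite eqxx.
  by rewrite /walk /= andbT; apply: imset_f.
case/andP => Ha /andP [/andP [Hy /eqP H1] Hp].
have [q [Hq Hl Hs]] : exists q, [/\ walk (contract e V) (delete e y) q,
    last (delete e y) q = delete e (last y p) &
    size q + (y e != (last y p) e) <= size p].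
  by apply: IH; rewrite /walk Hy.
move: H1; rewrite (hamming_lift e).
case: (boolP (a e == y e)) => [/eqP Hay|Hay] /=.
  rewrite add0n => H1; exists (delete e y :: q); split => //=.
  - rewrite /walk /= imset_f //= /adjV H1 eqxx andbT.
    by case/andP: Hq => -> ->.
  - by rewrite Hay; move: Hs; rewrite addSn ltnS.
rewrite add1n => /eqP; rewrite eqSS => /eqP /hamming0 Hd.
exists q; split; rewrite ?Hd //.
move: Hs Hay; case: (a e); case: (y e); case: (last y p e) => //= Hs _; lia.
Qed.

Lemma iso_contract m (e : 'I_m.+1) (V : {set vert m.+1}) :
  iso V -> iso (contract e V).
Proof.
move=> H x y /imsetP [a Ha ->] /imsetP [b Hb ->].
have [[p [Hw Hl Hs]] _] := H a b Ha Hb.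
have [q [Hq Hl' Hs']] := proj_walk e Hw.
rewrite Hl in Hl' Hs'; rewrite -Hl'; apply: gdist_of_walk => //.
rewrite Hl'; move: Hs'; rewrite Hs (hamming_lift e a b); lia.
Qed.

Lemma hamming_lift2 m (f : 'I_m.+2) (e : 'I_m.+1) (x y : vert m.+2) :
  hamming x y = (x f != y f) + ((x (lift f e) != y (lift f e)) +
     hamming (delete e (delete f x)) (delete e (delete f y))).
Proof. by rewrite (hamming_lift f) (hamming_lift e) !ffunE. Qed.

Lemma arith1 (p q r : bool) (h1 h2 : nat) :
  (true != p) + ((q != r) + h1) = 1 -> (p != ~~ true) + ((r != ~~ q) + h2) = 1 ->
  h1 = 0 /\ ((p != true) || (r != q)).
Proof. case: p; case: q; case: r => /=; lia. Qed.

Lemma arith2 (p q r : bool) (h1 : nat) :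
  (true != p) + ((q != r) + h1) = 1 -> ~~ p -> q = r.
Proof. case: p; case: q; case: r => //=; lia. Qed.

Theorem mainTheorem18 (m : nat) (V : {set {ffun 'I_m.+1 -> bool}})
    (e : 'I_m.+1) :
  affine_pc V ->
  forall v : {ffun 'I_m -> bool},
    is_antipode (contract e V) v <->
    (exists u, is_antipode V u /\ delete e u = v).
Proof.
move=> [[_ isoV _] [f [V' [[_ isoV' _] antV' HV]]]] v; split; last first.
  move=> [u [[Hu Hnu _] <-]]; apply: antipode_iso.
  - exact: iso_contract.
  - exact: imset_f.
  - by rewrite -delete_negv; apply: imset_f.
move=> [Hv Hnv _].
suff [u [Hu Hnu Hd]] : exists u, [/\ u \in V, negv u \in V & delete e u = v].
  by exists u; split => //; apply: antipode_iso.
case/imsetP: Hv => a Ha Hva; case/imsetP: Hnv => b Hb Hvb.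
have Ha' := Ha; have Hb' := Hb.
rewrite HV in Ha' Hb'.
case/imsetP: Ha' => A; rewrite inE => /andP [HA HAf] Hab.
case/imsetP: Hb' => B; rewrite inE => /andP [HB HBf] Hbb.
set e' := lift f e.
have ae : a e = A e' by rewrite Hab ffunE.
have be : b e = B e' by rewrite Hbb ffunE.
case: (boolP (A e' == B e')) => [/eqP HAB | HAB]; last first.
  exists a; split => //; suff -> : negv a = b by [].
  apply: hamming0; rewrite (hamming_lift e) delete_negv -Hva -Hvb hammingxx.
  by rewrite ffunE ae be; move: HAB; case: (A e'); case: (B e').
have HN := antV' _ HB; set N := negv B in HN.
have hAN : hamming A N = 2.
  rewrite (hamming_lift2 f e) !ffunE HAf HBf -HAB.
  have -> : delete e (delete f N) = v.
    by rewrite !delete_negv -Hbb -Hvb negvK.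
  by rewrite -Hab -Hva hammingxx; case: (A e').
have [[p [Hw Hl Hs]] _] := isoV' _ _ HA HN.
rewrite hAN in Hs.
case: p Hw Hl Hs => [|M [|N' [|]]] //= Hw Hl _.
subst N'.
case/andP: Hw => _ /andP [/andP [HM /eqP hAM]] /andP [/andP [_ /eqP hMN] _].
rewrite (hamming_lift2 f e) in hAM; rewrite (hamming_lift2 f e) in hMN.
move: hAM hMN; rewrite /N !ffunE HAf HBf -HAB.
have Hdd : forall x : vert m.+2, delete e (delete f x) = delete e (delete f A) ->
   delete e (delete f x) = v by move=> x ->; rewrite -Hab.
rewrite -/e'.
set h1 := hamming (delete e (delete f A)) (delete e (delete f M)).
set h2 := hamming _ (delete e (delete f (negv B))).
move=> hAM hMN.
have [h1z HM1] := arith1 hAM hMN.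
move: (h1z); rewrite /h1 => /hamming0 /esym /Hdd Hd.
case: (boolP (M f)) => HMf /=.
- exists (delete f M); split => //.
  + by rewrite HV; apply: imset_f; rewrite inE HM HMf.
  + suff -> : negv (delete f M) = b by [].
    apply: hamming0; rewrite (hamming_lift e) delete_negv Hd -Hvb hammingxx.
    by rewrite !ffunE be -HAB -/e'; move: HM1 HMf; case: (A e'); case: (M e'); case: (M f).
- have HAM := arith2 hAM HMf.
  exists a; split => //.
  suff -> : negv a = delete f (negv M).
    rewrite HV; apply: imset_f; rewrite inE antV' //= ffunE.
    by rewrite HMf.
  apply: hamming0; rewrite (hamming_lift e) !delete_negv -Hva Hd hammingxx.
  by rewrite !ffunE ae HAM addn0; case: (M e').
Qed.
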